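(* Let $\Theta=(\alpha,\rho_r,\rho_d,\rho_s,\rho_0,T)$ with $\alpha>1$, $\rho_r,\rho_d,\rho_s,\rho_0>0$, $T>1$, such that $K_{max}(\Theta):=\min\big(\frac T4,\frac{\rho_r}{3\rho_0},\frac{3\rho_d}{2\rho_0}\big)>10$. Then for every $R>0$, $\zeta'_{zf}(R,\Theta)<\zeta'_{csi}(R,\Theta)$.
   Context: For reals $M>K$, $1\le K\le\tau<T$, $$\gamma_u=\frac{K+\tau}{2\tau(M-K)}\Big(2^{\frac{R}{K(1-\tau/T)}}-1\Big)+\sqrt{\Big(\frac{K+\tau}{2\tau(M-K)}\Big(2^{\frac{R}{K(1-\tau/T)}}-1\Big)\Big)^2+\frac{2^{\frac{R}{K(1-\tau/T)}}-1}{\tau(M-K)}},$$ $$\frac{R}{\zeta_{zf}(M,K,\tau,R,\Theta)}=\alpha K\gamma_u+\rho_s+K\Big(\rho_d+\frac{8K^2\rho_0}{3T}\Big)+M\Big(\rho_r+2K\rho_0+\frac{4K^2\rho_0}{T}\Big).$$ $\zeta'_{zf}(R,\Theta)$ is the supremum of $\zeta_{zf}$ over real $(M,K,\tau)$ with $1\le K\le K_{max}(\Theta)$, $K\le\tau<T$, $M>K$. For real $M>K\ge1$, $\frac{1}{\zeta_{csi}(M,K,R,\Theta)}=\frac1R\big[\frac{\alpha K}{M-K}(2^{R/K}-1)+M\rho_r+K\rho_d+\rho_s\big]$ and $\zeta'_{csi}(R,\Theta)$ is its maximum over real $(M,K)$ with $1\le K\le K_{max}(\Theta)$, $M>K$.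 *)

(* Defs.v *)
From HB Require Import structures.
From mathcomp Require Import all_boot all_order all_algebra.
From mathcomp Require Import all_classical all_reals all_analysis.
Set Implicit Arguments. Unset Strict Implicit. Unset Printing Implicit Defensive.
Import Order.TTheory GRing.Theory Num.Theory.
Local Open Scope ring_scope.
Local Open Scope classical_set_scope.

Section Defs.
Variable R : realType.

Definition gamma_u (T M K tau Rt : R) : R :=
  let e := (2:R) `^ (Rt / (K * (1 - tau / T))) - 1 in
  let a := (K + tau) / (2 * tau * (M - K)) * e in
  a + Num.sqrt (a ^+ 2 + e / (tau * (M - K))).

Definition zeta_zf (alpha rr rd rs r0 T : R) (M K tau Rt : R) : R :=
  Rt / (alpha * K * gamma_u T M K tau Rt + rs
        + K * (rd + 8 * K ^+ 2 * r0 / (3 * T))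
        + M * (rr + 2 * K * r0 + 4 * K ^+ 2 * r0 / T)).

Definition Kmax (alpha rr rd rs r0 T : R) : R :=
  Num.min (T / 4) (Num.min (rr / (3 * r0)) (3 * rd / (2 * r0))).

Definition zeta_zf' (alpha rr rd rs r0 T : R) (Rt : R) : R :=
  sup [set z | exists M K tau : R,
         1 <= K /\ K <= Kmax alpha rr rd rs r0 T /\ K <= tau /\ tau < T /\ K < M
          /\ z = zeta_zf alpha rr rd rs r0 T M K tau Rt].

Definition zeta_csi (alpha rr rd rs r0 T : R) (M K Rt : R) : R :=
  (1 / Rt * (alpha * K / (M - K) * ((2:R) `^ (Rt / K) - 1)
             + M * rr + K * rd + rs))^-1.

Definition zeta_csi' (alpha rr rd rs r0 T : R) (Rt : R) : R :=
  sup [set z | exists M K : R,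
         1 <= K /\ K <= Kmax alpha rr rd rs r0 T /\ K < M
          /\ z = zeta_csi alpha rr rd rs r0 T M K Rt].
End Defs.

(* Main.v *)
Require Import Defs.
From HB Require Import structures.
From mathcomp Require Import all_boot all_order all_algebra.
From mathcomp Require Import all_classical all_reals all_analysis.
From mathcomp Require Import ring lra.
Import Order.TTheory GRing.Theory Num.Theory.
Local Open Scope ring_scope.

Lemma pow2_ge1 (R : realType) (x : R) : 0 <= x -> 1 <= (2:R) `^ x.
Proof.
move=> hx; have h := @ler_powR R 2 (ler1n R 2) 0 x hx; by rewrite powRr0 in h.
Qed.

Lemma gamma_ge (R : realType) (T M K tau Rt : R) :
  1 <= K -> K <= tau -> tau < T -> K < M -> 0 < Rt ->
  ((2:R) `^ (Rt / K) - 1) / (M - K) <= gamma_u T M K tau Rt.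
Proof.
move=> hK hKt htT hKM hR.
have hT0 : 0 < T by lra.
have ht0 : 0 < tau by lra.
have hMK : 0 < M - K by lra.
have htT' : tau / T < 1 by rewrite ltr_pdivrMr // mul1r.
have htT0 : 0 <= tau / T by rewrite divr_ge0 //; lra.
set c := 1 - tau / T.
have hc : 0 < c by rewrite /c; lra.
have hc1 : c <= 1 by rewrite /c; lra.
have hx0 : 0 <= Rt / K by rewrite divr_ge0 //; lra.
have hexp : Rt / K <= Rt / (K * c).
  rewrite invfM mulrA ler_pdivlMr //; exact: ler_piMr.
have he0 : 0 <= (2:R) `^ (Rt / K) - 1 by rewrite subr_ge0 pow2_ge1.
have he : (2:R) `^ (Rt / K) - 1 <= (2:R) `^ (Rt / (K * c)) - 1.
  by rewrite lerD2r; apply: (@ler_powR R 2 (ler1n R 2)).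
rewrite /gamma_u -/c.
set e := (2:R) `^ (Rt / (K * c)) - 1.
set e0 := (2:R) `^ (Rt / K) - 1.
move: he0 he; rewrite -/e -/e0 => he0 he.
have hee : 0 <= e by lra.
set a := (K + tau) / (2 * tau * (M - K)) * e.
set h := e / (2 * (M - K)).
have ha : a = (K + tau) / tau * h.
  rewrite /a /h; field; apply/andP; split; apply/negP => /eqP; lra.
have hh0 : 0 <= h by rewrite /h divr_ge0 //; lra.
have hf : 1 <= (K + tau) / tau by rewrite ler_pdivlMr // mul1r; lra.
have hah : h <= a by rewrite ha; apply: ler_peMl.
have hs : 0 <= e / (tau * (M - K)) by rewrite divr_ge0 // mulr_ge0 //; lra.
have hsq : a <= Num.sqrt (a ^+ 2 + e / (tau * (M - K))).
  have -> : a = Num.sqrt (a ^+ 2) by rewrite sqrtr_sqr ger0_norm //; lra.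
  rewrite ler_sqrt; last by rewrite addr_ge0 // sqr_ge0.
  rewrite sqrtr_sqr ger0_norm; lra.
have h2 : e / (M - K) = 2 * h.
  rewrite /h; field; apply/negP => /eqP; lra.
have h3 : e0 / (M - K) <= e / (M - K).
  by rewrite ler_pM2r // invr_gt0.
lra.
Qed.

Theorem lemma8 (R : realType) (alpha rr rd rs r0 T : R)
  (halpha : 1 < alpha) (hrr : 0 < rr) (hrd : 0 < rd) (hrs : 0 < rs)
  (hr0 : 0 < r0) (hT : 1 < T) (hK : 10 < Kmax alpha rr rd rs r0 T) :
  forall Rt : R, 0 < Rt ->
    zeta_zf' alpha rr rd rs r0 T Rt < zeta_csi' alpha rr rd rs r0 T Rt.
Proof.
move=> Rt hR.
set D := fun M K : R => alpha * K / (M - K) * ((2:R) `^ (Rt / K) - 1)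
             + M * rr + K * rd + rs.
have hD : forall M K, 1 <= K -> K < M -> rs <= D M K /\
     zeta_csi alpha rr rd rs r0 T M K Rt = Rt / D M K.
  move=> M K hK1 hKM; split.
    rewrite /D.
    have : 0 <= alpha * K / (M - K) * ((2:R) `^ (Rt / K) - 1).
      rewrite mulr_ge0 // ?divr_ge0 ?mulr_ge0 //; try lra.
      by rewrite subr_ge0 pow2_ge1 // divr_ge0 //; lra.
    have : 0 <= M * rr by rewrite mulr_ge0 //; lra.
    have : 0 <= K * rd by rewrite mulr_ge0 //; lra.
    lra.
  by rewrite /zeta_csi mul1r invfM invrK.
have hKm : 1 <= Kmax alpha rr rd rs r0 T by lra.
rewrite /zeta_zf' /zeta_csi'.
set E2 := (X in _ < sup X).
set E1 := (X in sup X < _).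
have E2ub : has_ubound E2.
  exists (Rt / rs) => z [M [K [hK1 [_ [hKM ->]]]]].
  have [h1 ->] := hD M K hK1 hKM.
  by rewrite ler_pM2l // lef_pV2 // posrE; lra.

have E2ne : E2 (zeta_csi alpha rr rd rs r0 T 2 1 Rt).
  by exists 2, 1; do !split => //; lra.
set S := sup E2.
have hS : ubound E2 S := ub_le_sup E2ub.
have S0 : 0 < S.
  apply: (lt_le_trans _ (hS _ E2ne)).
  have [h1 ->] := hD 2 1 (lexx 1) (ltr1n R 2).
  rewrite divr_gt0 //; lra.
have hDS : forall M K, 1 <= K -> K <= Kmax alpha rr rd rs r0 T -> K < M ->
    Rt / S <= D M K.
  move=> M K hK1 hKx hKM.
  have [h1 h2] := hD M K hK1 hKM.
  have : zeta_csi alpha rr rd rs r0 T M K Rt <= S by apply: hS; exists M, K.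
  rewrite h2 ler_pdivrMr; last lra.
  by rewrite ler_pdivrMr // mulrC.
set B := Rt / (Rt / S + 2 * r0).
have hB0 : 0 < Rt / S + 2 * r0 by rewrite addr_gt0 ?divr_gt0 //; lra.
have E1ub : forall z, E1 z -> z <= B.
  move=> z [M [K [tau [hK1 [hKx [hKt [htT [hKM ->]]]]]]]].
  have h1 := hDS M K hK1 hKx hKM.
  have hg := @gamma_ge R T M K tau Rt hK1 hKt htT hKM hR.
  set g := gamma_u T M K tau Rt in hg *.
  set e0 := (2:R) `^ (Rt / K) - 1 in hg.
  have hDe : D M K = alpha * K * (e0 / (M - K)) + M * rr + K * rd + rs.
    by rewrite /D /e0; ring.
  have hag : alpha * K * (e0 / (M - K)) <= alpha * K * g.
    by apply: ler_wpM2l => //; rewrite mulr_ge0 //; lra.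
  have hMK1 : 1 <= M * K by rewrite -[1]mul1r; apply: ler_pM => //; lra.
  have hq1 : 0 <= 8 * K ^+ 2 * r0 / (3 * T).
    by rewrite divr_ge0 ?mulr_ge0 //; lra.
  have hq2 : 0 <= 4 * K ^+ 2 * r0 / T.
    by rewrite divr_ge0 ?mulr_ge0 //; lra.
  have hq1' : 0 <= K * (8 * K ^+ 2 * r0 / (3 * T)) by rewrite mulr_ge0 //; lra.
  have hq2' : 0 <= M * (4 * K ^+ 2 * r0 / T) by rewrite mulr_ge0 //; lra.
  have h2r : 2 * r0 <= 2 * r0 * (M * K) by apply: ler_peMr => //; lra.
  have hZ : Rt / S + 2 * r0 <= alpha * K * g + rs
        + K * (rd + 8 * K ^+ 2 * r0 / (3 * T))
        + M * (rr + 2 * K * r0 + 4 * K ^+ 2 * r0 / T).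
    have -> : K * (rd + 8 * K ^+ 2 * r0 / (3 * T)) =
       K * rd + K * (8 * K ^+ 2 * r0 / (3 * T)) by ring.
    have -> : M * (rr + 2 * K * r0 + 4 * K ^+ 2 * r0 / T) =
       M * rr + 2 * r0 * (M * K) + M * (4 * K ^+ 2 * r0 / T) by ring.
    lra.
  rewrite /zeta_zf -/g /B ler_pM2l // lef_pV2 // ?posrE //; try exact: hZ; try exact: (lt_le_trans hB0 hZ).
have E1ne : E1 (zeta_zf alpha rr rd rs r0 T 2 1 1 Rt).
  by exists 2, 1, 1; do !split => //; lra.
have hsup1 : sup E1 <= B by apply: ge_sup; [exists (zeta_zf alpha rr rd rs r0 T 2 1 1 Rt) | ].
apply: (le_lt_trans hsup1).
rewrite /B ltr_pdivrMr // mulrDr.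
have -> : S * (Rt / S) = Rt by rewrite mulrC divfK // gt_eqF.
have : 0 < S * (2 * r0) by rewrite mulr_gt0 // mulr_gt0.
lra.
Qed.
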